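(* Fix any realization of a frame: a finite set $K$ of active devices, slots $\{1,\dots,M\}$, and for each $k\in K$ an intended slot set $I_k\subseteq\{1,\dots,M\}$ and a transmitted slot set $A_k\subseteq I_k$. For each slot $n$ let $A^n=\{k\in K: n\in A_k\}$. Define the genie-aided decoded set $D_{\mathrm g}$ as the result of starting from $D=\emptyset$ and repeatedly adding to $D$ a device $k$ whenever there is a slot $n$ with $A^n\setminus D=\{k\}$, until no such slot exists. Define the IDENTIFY decoded set $D_{\mathrm I}$ as the result of starting from $D=\emptyset$ and repeatedly adding to $D$ a device $k$ whenever there exist a slot $n$ and a subset $T\subseteq S_n(D)$, where $S_n(D)=\{k'\in D: n\in I_{k'}\}$ is the candidate list of slot $n$, such that $T\subseteq A^n$ and $A^n\setminus T=\{k\}$, until no such pair $(n,T)$ yields a new device. Then, with an unlimited number of iterations, $D_{\mathrm I}=D_{\mathrm g}$. Consequently, the IDENTIFY receiver achieves exactly the same packet loss rate as a receiver that knows the positions of the dropped replicas.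
   Context: Setting: irregular repetition slotted ALOHA under a collision channel with energy-harvesting devices. Each active device intends to send identical replicas of its packet in a set $I_k$ of slots of the frame, but some intended replicas may be dropped for lack of energy; $A_k\subseteq I_k$ denotes the slots where replicas were actually transmitted. The receiver knows, upon decoding a device's packet, its intended slot set $I_k$, but not $A_k$. The receiver can classify a slot as idle, singleton (exactly one packet) or collision; subtracting from slot $n$ the packets of a set $T$ of decoded devices yields a singleton slot exactly when all packets in $T$ were actually transmitted in slot $n$ (i.e. $T\subseteq A^n$) and exactly one other packet remains ($|A^n\setminus T|=1$), in which case that remaining packet is decoded. The genie-aided receiver knows the sets $A_k$ and performs standard successive interference cancellation on the transmitted replicas only. The packet loss rate is the probability that a transmitted packet is not decoded by the end of the decoding process. *)

(* Defs.v *)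
From mathcomp Require Import all_boot.
From Stdlib Require Import Relations.
Set Implicit Arguments. Unset Strict Implicit. Unset Printing Implicit Defensive.

(* K : finite type of active devices; slots are 'I_M (slot n+1 of the paper is n).
   I k : intended slot set, A k : transmitted slot set (A k \subset I k). *)
Section Decoding.
Variables (K : finType) (M : nat) (I A : K -> {set 'I_M}).

Definition Aslot (n : 'I_M) : {set K} := [set k | n \in A k].

Definition cand (D : {set K}) (n : 'I_M) : {set K} := [set k' in D | n \in I k'].

Definition genie_step (D D' : {set K}) : Prop :=
  exists n k, Aslot n :\: D = [set k] /\ D' = k |: D.

Definition genie_terminal (D : {set K}) : Prop :=
  forall n k, Aslot n :\: D <> [set k].

Definition identify_cond (D : {set K}) (n : 'I_M) (T : {set K}) (k : K) : Prop :=
  T \subset cand D n /\ T \subset Aslot n /\ Aslot n :\: T = [set k].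

Definition identify_step (D D' : {set K}) : Prop :=
  exists n T k, identify_cond D n T k /\ k \notin D /\ D' = k |: D.

Definition identify_terminal (D : {set K}) : Prop :=
  forall n T k, identify_cond D n T k -> k \in D.

Definition genie_result (D : {set K}) : Prop :=
  clos_refl_trans _ genie_step set0 D /\ genie_terminal D.

Definition identify_result (D : {set K}) : Prop :=
  clos_refl_trans _ identify_step set0 D /\ identify_terminal D.

End Decoding.

(* Main.v *)
Require Import Defs.
From mathcomp Require Import all_boot.
From Stdlib Require Import Relations.

Lemma key_in (K : finType) (X T E : {set K}) (k : K) :
  T \subset E -> X :\: T = [set k] -> (forall k', X :\: E <> [set k']) -> k \in E.
Proof.
move=> TE H term; apply/negPn/negP => kE; apply: (term k).
apply/setP => x; rewrite !inE.
have Hx : (x \in X :\: T) = (x \in [set k]) by rewrite H.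
 rewrite /= !inE in Hx.
case: (eqVneq x k) => [->|xk].
  have : (k \in X :\: T) = (k \in [set k]) by rewrite H.
  rewrite /= !inE eqxx => /andP[_ ->].
  by rewrite kE.
rewrite (negbTE xk) in Hx *; apply/negbTE/negP => /andP[xE xX].
move: Hx; rewrite xX andbT => /negbFE xT.
by move: xE; rewrite (subsetP TE _ xT).
Qed.

Lemma crt_sub (K : finType) (R : relation {set K}) (E : {set K}) :
  (forall D D', R D D' -> D \subset E -> D' \subset E) ->
  forall D D', clos_refl_trans _ R D D' -> D \subset E -> D' \subset E.
Proof.
move=> step D D' h; induction h as [x y r| x | x y z _ IH1 _ IH2].
- by apply: step.
- by [].
- by move=> h; apply: IH2; apply: IH1.
Qed.

Theorem theorem3 (K : finType) (M : nat) (I A : K -> {set 'I_M})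
  (hA : forall k, A k \subset I k) (DI Dg : {set K}) :
  identify_result I A DI -> genie_result A Dg -> DI = Dg.
Proof.
move=> [rI tI] [rG tG]; apply/eqP; rewrite eqEsubset; apply/andP; split.
- apply: (@crt_sub K _ Dg _ set0 DI rI (sub0set _)) => {rI tI}.
  move=> D D' [n [T [k [[TC [TA H]] [_ ->]]]]] DE.
  rewrite subUset DE andbT sub1set.
  apply: (@key_in K (Aslot A n) T Dg k _ H (fun k' => tG n k')).
  apply: subset_trans TC _; apply: subset_trans DE.
  by apply/subsetP => x; rewrite inE => /andP[].
- apply: (@crt_sub K _ DI _ set0 Dg rG (sub0set _)) => {rG tG}.
  move=> D D' [n [k [H ->]]] DE.
  rewrite subUset DE andbT sub1set.
  apply: (tI n (Aslot A n :&: D)); split; [|split].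
  + apply/subsetP => x; rewrite !inE => /andP[xA xD].
    rewrite (subsetP DE _ xD) /=.
    by apply: (subsetP (hA x)).
  + exact: subsetIl.
  + by rewrite setDIr setDv set0U.
Qed.
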